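(* Let $q\in\mathbb{K}$ be a primitive $\ell$-th root of unity with $\ell>1$ odd, and $n\ge1$. For $a\in K^i_{d_1}(n)$ and $b\in K^j_{d_2}(n)$, \[ \kappa(ab)=q^j\kappa(a)b+(-q^{-1})^{d_1-i}a\kappa(b). \] For $a\in\Omega^i_{d_1}(n)$ and $b\in\Omega^j_{d_2}(n)$, \[ \delta(ab)=q^{d_2-j}\delta(a)b+(-q^{-1})^ia\delta(b). \]
   Context: Quantum polynomial functors: for $q\in\mathbb{K}^\times$, $\mathcal{H}_d$ is the Hecke algebra with generators $T_1,\dots,T_{d-1}$, relations $T_iT_j=T_jT_i$ ($|i-j|>1$), $T_iT_{i+1}T_i=T_{i+1}T_iT_{i+1}$, $(T_i-q)(T_i+q^{-1})=0$, basis $T_w$, $w\in\mathfrak{S}_d$. $V_n=\mathbb{K}^n$ with basis $e_1,\dots,e_n$; $T_i$ acts on $V_n^{\otimes d}$ by $R_n$ in positions $i,i+1$, where $R_n(e_i\otimes e_j)=e_j\otimes e_i$ ($i<j$), $q\,e_i\otimes e_i$ ($i=j$), $(q-q^{-1})e_i\otimes e_j+e_j\otimes e_i$ ($i>j$). $\mathcal{P}^d_q$ is the category of $\mathbb{K}$-linear functors from the category with objects $V_n^{\otimes d}$ and $\mathcal{H}_d$-linear maps to finite-dimensional vector spaces, $F(n):=F(V_n^{\otimes d})$. $\mathcal{P}_q$ is braided monoidal with $(F\otimes G)(n)=F(n)\otimes G(n)$ and braiding $R_{F,G}:F\otimes G\to G\otimes F$ uniquely determined by $R_{I,I}(n)=R_n$,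 naturality in $F,G$, unit compatibility and the hexagon identities. $S^*_q(n)$: algebra generated by $e_1,\dots,e_n$ in degree 1 with $e_je_i=qe_ie_j$ ($i<j$); $\Lambda^*_q(n)$: generated with $e_j\wedge e_i=-q^{-1}e_i\wedge e_j$ ($i<j$), $e_i\wedge e_i=0$; their degree-$d$ parts define quotient functors $S^d_q,\Lambda^d_q$ of $I^{\otimes d}$, with products $\mu$. The action of $\sum_\sigma q^{l(\sigma)}T_\sigma$ (resp. $\sum_\sigma(-q^{-1})^{l(\sigma)}T_\sigma$), over $(i,j)$-shuffles $\sigma$, on $I^{\otimes i+j}$ descends to $\Delta^{(i,j)}:S^{i+j}_q\to S^i_q\otimes S^j_q$ (resp. $\Lambda^{i+j}_q\to\Lambda^i_q\otimes\Lambda^j_q$). Set $\Omega^i_d=S^{d-i}_q\otimes\Lambda^i_q$ and $K^i_d=\Omega^{d-i}_d=S^i_q\otimes\Lambda^{d-i}_q$. $\delta:\Omega^i_d\to\Omega^{i+1}_d$ is $(1\otimes\mu)(\Delta^{(d-i-1,1)}\otimes1)$ and $\kappa:K^i_d\to K^{i+1}_d$ is $(\mu\otimes1)(1\otimes\Delta^{(1,d-i-1)})$, using $S^1_q=\Lambda^1_q=I$. The product on $\Omega=K=\bigoplus S^a_q\otimes\Lambda^b_q$ is $(a\otimes b)(c\otimes d)=(\mu\otimes\mu)(a\otimes R(b\otimes c)\otimes d)$. *)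

(* Defs.v *)
(* Concrete model of the objects of Proposition 5.3,
   evaluated at a fixed n : everything is computed on V_n^{(x) d}
   (tensors = coefficient functions on words), and the quotients
   S^a_q(n) (x) Lambda^b_q(n) are handled as congruence modulo the
   defining relations. *)
From HB Require Import structures.
From mathcomp Require Import all_boot all_order all_algebra.
Set Implicit Arguments. Unset Strict Implicit. Unset Printing Implicit Defensive.
Import Order.TTheory GRing.Theory Num.Theory.
Local Open Scope ring_scope.

Section QuantumKoszul.
Variables (K : fieldType) (q : K) (n : nat).

(* An element of V_n^{(x) d}: coefficient of e_{w_1} (x) ... (x) e_{w_d}
   for each word w of length d (values on other words are ignored). *)
Definition tens := seq 'I_n -> K.

Definition tz : tens := fun _ => 0.

Definition ev (w : seq 'I_n) : tens := fun u => (u == w)%:R.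

(* R_n acting on letters p, p+1 (0-indexed) of the basis tensor e_w *)
Definition Rpos (p : nat) (w : seq 'I_n) : tens :=
  match drop p w with
  | i :: j :: r =>
      let sw := take p w ++ j :: i :: r in
      if (i < j)%N then ev sw
      else if i == j then (fun u => q * ev w u)
      else (fun u => (q - q^-1) * ev w u + ev sw u)
  | _ => ev w
  end.

(* The Hecke generator T_{p+1} on V_n^{(x) d} *)
Definition Top (d p : nat) (x : tens) : tens :=
  fun u => \sum_(w : d.-tuple 'I_n) x w * Rpos p w u.

(* moving the strand at position pos to the right through s strands:
   R at positions pos, pos+1, ..., pos+s-1 (applied in this order) *)
Fixpoint moveR (d pos s : nat) (x : tens) : tens :=
  match s with
  | 0 => x
  | s'.+1 => moveR d pos.+1 s' (Top d pos x)
  end.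

(* braiding R_{I^{(x)r}, I^{(x)s}} on the block of positions p..p+r+s-1,
   obtained from R_{I,I} = R_n by the hexagon identities *)
Fixpoint braid (d p r s : nat) (x : tens) : tens :=
  match r with
  | 0 => x
  | r'.+1 => braid d p r' s (moveR d (p + r') s x)
  end.

Definition tensor (D : nat) (x y : tens) : tens :=
  fun u => x (take D u) * y (drop D u).

(* product S^p(x)L^r times S^s(x)L^t -> S^{p+s}(x)L^{r+t}, on lifts:
   (mu (x) mu)(1 (x) R_{L^r,S^s} (x) 1); mu is the quotient map *)
Definition Kmul (p r s t : nat) (x y : tens) : tens :=
  braid (p + r + s + t) p r s (tensor (p + r) x y).

Fixpoint pullL (d s k : nat) (x : tens) : tens :=
  match k with
  | 0 => x
  | k'.+1 => pullL d s k' (Top d (s + k') x)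
  end.

Fixpoint pushR (d s k : nat) (x : tens) : tens :=
  match k with
  | 0 => x
  | k'.+1 => pushR d s k' (Top d (s - k'.+2) x)
  end.

(* kappa : S^s (x) L^m -> S^{s+1} (x) L^{m-1},
   (mu (x) 1)(1 (x) Delta^{(1,m-1)}), where Delta^{(1,m-1)} is the action of
   sum over (1,m-1)-shuffles sigma of (-q^-1)^{l(sigma)} T_sigma
   (sigma = s_1 s_2 ... s_k, k < m) on the Lambda-block; 0 if m = 0. *)
Definition kappa (s m : nat) (x : tens) : tens :=
  if m is 0 then tz else
  fun u => \sum_(k < m) (- q^-1) ^+ k * pullL (s + m) s k x u.

(* delta : S^s (x) L^m -> S^{s-1} (x) L^{m+1},
   (1 (x) mu)(Delta^{(s-1,1)} (x) 1), Delta^{(s-1,1)} = action of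
   sum over (s-1,1)-shuffles sigma of q^{l(sigma)} T_sigma
   (sigma = s_{s-1} ... s_{s-k}, k < s) on the S-block; 0 if s = 0. *)
Definition delta (s m : nat) (x : tens) : tens :=
  if s is 0 then tz else
  fun u => \sum_(k < s) q ^+ k * pushR (s + m) s k x u.

(* Generators of the kernel of V^{(x)(a+b)} -> S^a_q(n) (x) Lambda^b_q(n):
   e_u (x) rel (x) e_v with rel a defining relation of S^*_q placed inside
   the first a slots, or of Lambda^*_q inside the last b slots.
   relgen a b w p : relation at letters p,p+1 of the word w. *)
Definition relgen (a b : nat) (w : seq 'I_n) (p : nat) : tens :=
  match drop p w with
  | i :: j :: r =>
      let sw := take p w ++ j :: i :: r in
      if (p.+2 <= a)%N then
        (if (i < j)%N then (fun u => ev sw u - q * ev w u) else tz)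
      else if (a <= p)%N && (p.+2 <= a + b)%N then
        (if (i < j)%N then (fun u => ev sw u + q^-1 * ev w u)
         else if i == j then ev w else tz)
      else tz
  | _ => tz
  end.

(* x and y (tensors of degree a+b) have the same image in
   S^a_q(n) (x) Lambda^b_q(n) : their difference lies in the span
   of the relation generators. *)
Definition cong (a b : nat) (x y : tens) : Prop :=
  exists c : (a + b).-tuple 'I_n -> nat -> K,
    forall u : (a + b).-tuple 'I_n,
      x u - y u = \sum_(w : (a + b).-tuple 'I_n)
                    \sum_(p < a + b) c w p * relgen a b w p u.

End QuantumKoszul.

(* Main.v *)
Require Import Defs.
From HB Require Import structures.
From mathcomp Require Import all_boot all_order all_algebra.
From mathcomp Require Import ring lra zify.
From Stdlib Require Import FunctionalExtensionality.
Set Implicit Arguments. Unset Strict Implicit. Unset Printing Implicit Defensive.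
Import Order.TTheory GRing.Theory Num.Theory.
Local Open Scope ring_scope.

Section Work.
Variables (K : fieldType) (q : K) (n : nat).
Local Notation tens := (tens K n).

Definition swp (p : nat) (u : seq 'I_n) : seq 'I_n :=
  match drop p u with i :: j :: r => take p u ++ j :: i :: r | _ => u end.
Definition lc1 (i j : 'I_n) : K := if (i < j)%N then 0 else if i == j then q else q - q^-1.
Definition lc2 (i j : 'I_n) : K := if (i < j)%N then 1 else if i == j then 0 else 1.
Definition c1 p (u : seq 'I_n) : K :=
  match drop p u with i :: j :: _ => lc1 i j | _ => 1 end.
Definition c2 p (u : seq 'I_n) : K :=
  match drop p u with i :: j :: _ => lc2 i j | _ => 0 end.
Definition Tf p (x : tens) : tens := fun u => c1 p u * x u + c2 p u * x (swp p u).

Lemma drop_cat_sz (pre r : seq 'I_n) p : size pre = p -> drop p (pre ++ r) = r.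
Proof. by move=> <-; rewrite drop_size_cat. Qed.
Lemma take_cat_sz (pre r : seq 'I_n) p : size pre = p -> take p (pre ++ r) = pre.
Proof. by move=> <-; rewrite take_size_cat. Qed.

Lemma swp_cat p pre (i j : 'I_n) r : size pre = p ->
  swp p (pre ++ i :: j :: r) = pre ++ j :: i :: r.
Proof. by move=> hp; rewrite /swp (drop_cat_sz _ hp) (take_cat_sz _ hp). Qed.
Lemma c1_cat p pre (i j : 'I_n) r : size pre = p -> c1 p (pre ++ i :: j :: r) = lc1 i j.
Proof. by move=> hp; rewrite /c1 (drop_cat_sz _ hp). Qed.
Lemma c2_cat p pre (i j : 'I_n) r : size pre = p -> c2 p (pre ++ i :: j :: r) = lc2 i j.
Proof. by move=> hp; rewrite /c2 (drop_cat_sz _ hp). Qed.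

Lemma decomp p (u : seq 'I_n) : (p.+1 < size u)%N ->
  exists pre i j r, size pre = p /\ u = pre ++ i :: j :: r.
Proof.
move=> h; exists (take p u).
case E: (drop p u) => [|i [|j r]].
- by move: (congr1 size E); rewrite size_drop /=; lia.
- by move: (congr1 size E); rewrite size_drop /=; lia.
exists i, j, r; split; first by rewrite size_take; case: ifP => //; lia.
by rewrite -E cat_take_drop.
Qed.

Lemma short_drop p (u : seq 'I_n) : (size u <= p.+1)%N ->
  exists s, drop p u = s /\ (size s <= 1)%N.
Proof. by move=> h; exists (drop p u); split => //; rewrite size_drop; lia. Qed.

Lemma swp_short p u : (size u <= p.+1)%N -> swp p u = u.
Proof. by move=> /short_drop [[|i [|j r]] [E hs]]; rewrite /swp E. Qed.
Lemma c1_short p u : (size u <= p.+1)%N -> c1 p u = 1.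
Proof. by move=> /short_drop [[|i [|j r]] [E hs]]; rewrite /c1 E. Qed.
Lemma c2_short p u : (size u <= p.+1)%N -> c2 p u = 0.
Proof. by move=> /short_drop [[|i [|j r]] [E hs]]; rewrite /c2 E. Qed.
Lemma Tf_short p x u : (size u <= p.+1)%N -> Tf p x u = x u.
Proof. by move=> h; rewrite /Tf c1_short // c2_short //; ring. Qed.

Lemma size_swp p u : size (swp p u) = size u.
Proof.
case: (ltnP p.+1 (size u)) => h; last by rewrite swp_short.
have [pre [i [j [r [hp ->]]]]] := decomp h.
by rewrite swp_cat // !size_cat.
Qed.

Lemma swpK p u : swp p (swp p u) = u.
Proof.
case: (ltnP p.+1 (size u)) => h; last by rewrite !swp_short.
have [pre [i [j [r [hp ->]]]]] := decomp h.
by rewrite !swp_cat.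
Qed.

Lemma lc2C i j : lc2 i j = lc2 j i.
Proof.
rewrite /lc2 -!(inj_eq val_inj) /=.
by do !case: ifP => /= ?; try lia.
Qed.

Lemma c2_swp p u : c2 p (swp p u) = c2 p u.
Proof.
case: (ltnP p.+1 (size u)) => h; last by rewrite !swp_short.
have [pre [i [j [r [hp ->]]]]] := decomp h.
by rewrite swp_cat // !c2_cat // lc2C.
Qed.

Lemma sum_tuple_eq d (F : seq 'I_n -> K) (u : seq 'I_n) :
  \sum_(w : d.-tuple 'I_n) F w * (u == w)%:R = if size u == d then F u else 0.
Proof.
case: eqP => hs.
- pose t : d.-tuple 'I_n := Tuple (introT eqP hs).
  rewrite (bigD1 t) //= big1 ?addr0 ?eqxx ?mulr1 //.
  move=> w hw; case: eqP => [E|]; last by rewrite mulr0.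
  have wt : w = t by apply: val_inj => /=; rewrite -E.
  by move: hw; rewrite wt eqxx.
- apply: big1 => w _; case: eqP => [E|]; last by rewrite mulr0.
  by exfalso; apply: hs; rewrite E size_tuple.
Qed.

Lemma Rpos_eq p (w u : seq 'I_n) :
  Rpos q p w u = (u == w)%:R * c1 p w + (u == swp p w)%:R * c2 p w.
Proof.
rewrite /Rpos /c1 /c2 /swp /ev /lc1 /lc2.
case: (drop p w) => [|i [|j r]] /=; try by rewrite mulr1 mulr0 addr0.
case: ifP => _; first by rewrite mulr0 mulr1 add0r.
case: ifP => _; first by rewrite mulr0 addr0 mulrC.
by rewrite mulr1 mulrC.
Qed.

Lemma Top_Tf d p x u : Top q d p x u = if size u == d then Tf p x u else 0.
Proof.
rewrite /Top.
have E : forall w : d.-tuple 'I_n, x w * Rpos q p w u =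
   (c1 p w * x w) * (u == w)%:R + (c2 p w * x w) * (swp p u == w)%:R.
  move=> w; rewrite Rpos_eq.
  have -> : (u == swp p w) = (swp p u == w).
    by apply/eqP/eqP => [->|<-]; rewrite swpK.
  ring.
rewrite (eq_bigr _ (fun w _ => E w)) big_split /=.
rewrite (sum_tuple_eq d (fun w => c1 p w * x w)).
rewrite (sum_tuple_eq d (fun w => c2 p w * x w)) size_swp c2_swp /Tf.
by case: ifP => _; rewrite ?addr0 // mulrC (mulrC (c2 p u)).
Qed.

End Work.


Section Work2.
Variables (K : fieldType) (q : K) (n : nat).
Local Notation tens := (tens K n).

Definition supp N (x : tens) := forall u, size u != N -> x u = 0.

Lemma supp_Tf N p (x : tens) : supp N x -> supp N (Tf q p x).
Proof. by move=> h u hu; rewrite /Tf !h ?size_swp // !mulr0 addr0. Qed.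

Lemma c_catL (p : nat) pre (i j : 'I_n) mid s : size pre = p ->
  [/\ swp p ((pre ++ i :: j :: mid) ++ s) = (pre ++ j :: i :: mid) ++ s,
      c1 q p ((pre ++ i :: j :: mid) ++ s) = lc1 q i j &
      c2 K p ((pre ++ i :: j :: mid) ++ s) = lc2 K i j].
Proof. by move=> hp; rewrite -!catA /= swp_cat // c1_cat // c2_cat. Qed.

Lemma Tf_comm p p' (x : tens) : (p.+2 <= p')%N -> Tf q p (Tf q p' x) = Tf q p' (Tf q p x).
Proof.
move=> hpp; apply: functional_extensionality => u.
case: (ltnP p'.+1 (size u)) => hs; last first.
  have hs' : (size (swp p u) <= p'.+1)%N by rewrite size_swp.
  rewrite (Tf_short _ _ hs) {1}/Tf (Tf_short _ _ hs) (Tf_short _ _ hs').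
  by [].
have [pre' [k [l [r [hp' ->]]]]] := decomp hs.
have hs2 : (p.+1 < size pre')%N by lia.
have [pre [i [j [mid [hp E]]]]] := decomp hs2; subst pre'.
have hsz : forall a b, size (pre ++ a :: b :: mid) = p'.
  by move=> a b; rewrite -hp' !size_cat.
rewrite /Tf.
have [e1 e2 e3] := c_catL i j mid (k :: l :: r) hp.
have [f1 f2 f3] := c_catL j i mid (k :: l :: r) hp.
have [g1 g2 g3] := c_catL i j mid (l :: k :: r) hp.
rewrite e1 e2 e3.
rewrite !(swp_cat (p:=p')) ?hsz // !(@c1_cat K q n p') ?hsz // !(@c2_cat K n p') ?hsz //.
rewrite ?e1 ?e2 ?e3 ?f1 ?f2 ?f3 ?g1 ?g2 ?g3.
ring.
Qed.

Lemma E3 (pre : seq 'I_n) (r : seq 'I_n) (a b c : 'I_n) :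
  pre ++ a :: b :: c :: r = (pre ++ [:: a]) ++ b :: c :: r.
Proof. by rewrite -catA. Qed.
Lemma w3s (pre : seq 'I_n) p (r : seq 'I_n) (hp : size pre = p) (a b c : 'I_n) :
  swp p (pre ++ a :: b :: c :: r) = pre ++ b :: a :: c :: r.
Proof. by rewrite swp_cat. Qed.
Lemma w3c1 (pre : seq 'I_n) p (r : seq 'I_n) (hp : size pre = p) (a b c : 'I_n) :
  c1 q p (pre ++ a :: b :: c :: r) = lc1 q a b.
Proof. by rewrite c1_cat. Qed.
Lemma w3c2 (pre : seq 'I_n) p (r : seq 'I_n) (hp : size pre = p) (a b c : 'I_n) :
  c2 K p (pre ++ a :: b :: c :: r) = lc2 K a b.
Proof. by rewrite c2_cat. Qed.
Lemma w3s' (pre : seq 'I_n) p (r : seq 'I_n) (hp : size pre = p) (a b c : 'I_n) :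
  swp p.+1 (pre ++ a :: b :: c :: r) = pre ++ a :: c :: b :: r.
Proof.
have hp1 : size (pre ++ [:: a]) = p.+1 by rewrite size_cat hp addn1.
by rewrite !E3 swp_cat.
Qed.
Lemma w3c1' (pre : seq 'I_n) p (r : seq 'I_n) (hp : size pre = p) (a b c : 'I_n) :
  c1 q p.+1 (pre ++ a :: b :: c :: r) = lc1 q b c.
Proof.
have hp1 : size (pre ++ [:: a]) = p.+1 by rewrite size_cat hp addn1.
by rewrite !E3 c1_cat.
Qed.
Lemma w3c2' (pre : seq 'I_n) p (r : seq 'I_n) (hp : size pre = p) (a b c : 'I_n) :
  c2 K p.+1 (pre ++ a :: b :: c :: r) = lc2 K b c.
Proof.
have hp1 : size (pre ++ [:: a]) = p.+1 by rewrite size_cat hp addn1.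
by rewrite !E3 c2_cat.
Qed.

Ltac pair_dec a b :=
  let h := fresh "h" in
  case: (ltngtP a b) => h;
  [ rewrite ?h ?(ltn_eqF h) ?(gtn_eqF h) ?(leq_gtF (ltnW h))
  | rewrite ?h ?(ltn_eqF h) ?(gtn_eqF h) ?(leq_gtF (ltnW h))
  | have {h}h := val_inj h; subst b ].

Lemma Tf_braid N p (x : tens) : q != 0 -> supp N x -> (p.+3 <= N)%N ->
  Tf q p (Tf q p.+1 (Tf q p x)) = Tf q p.+1 (Tf q p (Tf q p.+1 x)).
Proof.
move=> q0 hx hN; apply: functional_extensionality => u.
case: (eqVneq (size u) N) => hu; last first.
  by rewrite (supp_Tf _ (supp_Tf _ (supp_Tf _ hx))) ?(supp_Tf _ (supp_Tf _ (supp_Tf _ hx))).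
have hs : (p.+1 < size u)%N by lia.
have [pre [i [j [r0 [hp E0]]]]] := decomp hs; subst u.
clear hs; case: r0 hu => [|k r] hu; first by move: hu; rewrite size_cat /=; lia.
rewrite /Tf.
do 4 rewrite ?(w3s r hp) ?(w3c1 r hp) ?(w3c2 r hp) ?(w3s' r hp) ?(w3c1' r hp) ?(w3c2' r hp).
rewrite /lc1 /lc2 -!(inj_eq val_inj) /=.
pair_dec i j; try pair_dec j k; try pair_dec i k; try pair_dec i j; try pair_dec j k; try pair_dec i k; rewrite ?ltnn ?eqxx; try lia.
all: try field; try exact q0; try done.
Qed.

End Work2.


Section Work3.
Variables (K : fieldType) (q : K) (n : nat).
Local Notation tens := (tens K n).

Fixpoint mR (pos s : nat) (x : tens) : tens :=
  match s with 0 => x | s'.+1 => mR pos.+1 s' (Tf q pos x) end.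
Fixpoint Br (p r s : nat) (x : tens) : tens :=
  match r with 0 => x | r'.+1 => Br p r' s (mR (p + r') s x) end.
Fixpoint PL (s k : nat) (x : tens) : tens :=
  match k with 0 => x | k'.+1 => PL s k' (Tf q (s + k') x) end.

Lemma mR_S pos s x : mR pos s.+1 x = mR pos.+1 s (Tf q pos x). Proof. by []. Qed.
Lemma Br_S p r s x : Br p r.+1 s x = Br p r s (mR (p + r) s x). Proof. by []. Qed.
Lemma PL_S s k x : PL s k.+1 x = PL s k (Tf q (s + k) x). Proof. by []. Qed.

Lemma supp_mR N pos s x : supp N x -> supp N (mR pos s x).
Proof. elim: s pos x => [|s IH] pos x hx //=; apply: IH; exact: supp_Tf. Qed.
Lemma supp_Br N p r s x : supp N x -> supp N (Br p r s x).
Proof. elim: r x => [|r IH] x hx //=; apply: IH; exact: supp_mR. Qed.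
Lemma supp_PL N s k x : supp N x -> supp N (PL s k x).
Proof. elim: k x => [|k IH] x hx //=; apply: IH; exact: supp_Tf. Qed.

Lemma Tf_comm' p p' (x : tens) : (p.+2 <= p')%N || (p'.+2 <= p)%N ->
  Tf q p (Tf q p' x) = Tf q p' (Tf q p x).
Proof. by case/orP => h; [exact: Tf_comm | symmetry; exact: Tf_comm]. Qed.

Lemma mR_Tf t pos s x : (t.+2 <= pos)%N || (pos + s < t)%N ->
  mR pos s (Tf q t x) = Tf q t (mR pos s x).
Proof.
elim: s pos x => [|s IH] pos x h //=.
rewrite (Tf_comm' (p:=pos) (p':=t)); last by lia.
by rewrite IH //; lia.
Qed.

Lemma PL_Tf t s k x : (t.+2 <= s)%N || (s + k < t)%N ->
  PL s k (Tf q t x) = Tf q t (PL s k x).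
Proof.
elim: k x => [|k IH] x h //=.
rewrite (Tf_comm' (p:=s + k) (p':=t)); last by lia.
by rewrite IH //; lia.
Qed.

Lemma Br_Tf t p r s x : (t.+2 <= p)%N || (p + r + s <= t)%N ->
  Br p r s (Tf q t x) = Tf q t (Br p r s x).
Proof.
elim: r x => [|r IH] x h //=.
rewrite mR_Tf; last by lia.
by rewrite IH //; lia.
Qed.

Lemma Br_mR pos s' p r s x : (pos + s' < p)%N ->
  Br p r s (mR pos s' x) = mR pos s' (Br p r s x).
Proof.
elim: s' pos x => [|s' IH] pos x h //=.
rewrite IH; last by lia.
by rewrite Br_Tf //; lia.
Qed.

Lemma Br_PL s0 k p r s x : (p + r + s <= s0)%N ->
  Br p r s (PL s0 k x) = PL s0 k (Br p r s x).
Proof.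
elim: k x => [|k IH] x h //=.
by rewrite IH // Br_Tf //; lia.
Qed.

Lemma mR_snoc pos s x : mR pos s.+1 x = Tf q (pos + s) (mR pos s x).
Proof.
elim: s pos x => [|s IH] pos x; first by rewrite /= addn0.
by rewrite mR_S IH addSnnS.
Qed.

Lemma mR_add pos s t x : mR pos (s + t) x = mR (pos + s) t (mR pos s x).
Proof.
elim: s pos x => [|s IH] pos x /=; first by rewrite addn0.
by rewrite IH addSnnS.
Qed.

Lemma PL_add s k1 k2 x : PL s (k1 + k2) x = PL s k1 (PL (s + k1) k2 x).
Proof.
elim: k2 x => [|k2 IH] x /=; first by rewrite addn0.
by rewrite addnS /= IH addnA.
Qed.

Lemma Br_first p r s x : Br p r.+1 s x = mR p s (Br p.+1 r s x).
Proof.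
elim: r x => [|r IH] x; first by rewrite /= addn0.
by rewrite Br_S IH [Br p.+1 r.+1 s x]Br_S addSnnS.
Qed.

Lemma KL N r C x : q != 0 -> supp N x -> (r + C + 2 <= N)%N ->
  mR r C (mR r.+1 C (Tf q r x)) = Tf q (r + C) (mR r C (mR r.+1 C x)).
Proof.
move=> q0; elim: C r x => [|C IH] r x hx hN; first by rewrite /= addn0.
rewrite !mR_S.
rewrite -(mR_Tf (t:=r) (pos:=r.+2)); last by lia.
rewrite (Tf_braid q0 hx); last by lia.
rewrite IH; first last.
- by lia.
- by apply: supp_Tf; apply: supp_Tf.
rewrite -(mR_Tf (t:=r) (pos:=r.+2)); last by lia.
by rewrite addSnnS.
Qed.

Lemma L10 N t pos s x : q != 0 -> supp N x -> (pos.+1 <= t)%N -> (t.+1 <= pos + s)%N ->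
  (pos + s < N)%N -> mR pos s (Tf q t x) = Tf q t.-1 (mR pos s x).
Proof.
move=> q0; elim: s pos x => [|s IH] pos x hx h1 h2 h3; first by lia.
rewrite mR_S.
case: (eqVneq t pos.+1) => ht.
- subst t; case: s IH h2 h3 => [|s] IH h2 h3; first by lia.
  rewrite mR_S -(Tf_braid q0 hx); last by lia.
  rewrite -(mR_Tf (t:=pos) (pos:=pos.+2)); last by lia.
  by rewrite ?mR_S.
- rewrite (Tf_comm q (p:=pos) (p':=t)); last by lia.
  rewrite IH //; [exact: supp_Tf | lia | lia | lia].
Qed.

Lemma Br_act N A B C r x : q != 0 -> supp N x -> (A <= r)%N -> (r.+2 <= A + B)%N ->
  (A + B + C <= N)%N -> Br A B C (Tf q r x) = Tf q (r + C) (Br A B C x).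
Proof.
move=> q0; elim: B A x => [|B IH] A x hx h1 h2 h3; first by lia.
rewrite !Br_first.
case: (eqVneq r A) => hr.
- subst r; case: B IH h2 h3 => [|B] IH h2 h3; first by lia.
  rewrite !Br_first (Br_Tf (t:=A)); last by lia.
  rewrite (KL q0 (N:=N)) //; last by lia.
  exact: supp_Br.
- rewrite IH //; try lia.
  by rewrite mR_Tf //; lia.
Qed.

Lemma Br_pas N A B C r x : q != 0 -> supp N x -> (A <= r)%N -> (r.+2 <= A + C)%N ->
  (A + B + C <= N)%N -> Br A B C (Tf q (r + B) x) = Tf q r (Br A B C x).
Proof.
move=> q0; elim: B x => [|B IH] x hx h1 h2 h3 /=; first by rewrite addn0.
rewrite addnS (L10 (N:=N)) //; try lia.
rewrite /= IH //; [exact: supp_mR | lia].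
Qed.

Lemma Br_PLs A B C x : PL (A + C) B (Br A B C x) = Br A B C.+1 x.
Proof.
elim: B x => [|B IH] x //.
rewrite PL_S !Br_S -(Br_Tf (t:=A + C + B)); last by lia.
by rewrite IH mR_snoc addnAC.
Qed.

Lemma Br_PL_act N A B C k x : q != 0 -> supp N x -> (k < B)%N -> (A + B + C <= N)%N ->
  Br A B C (PL A k x) = PL (A + C) k (Br A B C x).
Proof.
move=> q0; elim: k x => [|k IH] x hx h1 h2 //=.
rewrite IH; [|exact: supp_Tf | lia | lia].
rewrite (Br_act q0 (N:=N)) //; try lia.
by rewrite addnAC.
Qed.

Lemma Br_mR_pas N A B C r k x : q != 0 -> supp N x -> (A <= r)%N -> (r + k < A + C)%N ->
  (A + B + C <= N)%N -> Br A B C (mR (r + B) k x) = mR r k (Br A B C x).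
Proof.
move=> q0; elim: k r x => [|k IH] r x hx h1 h2 h3 //=.
rewrite -addSn IH; [|exact: supp_Tf | lia | lia | lia].
by rewrite (Br_pas q0 (N:=N)) //; lia.
Qed.

End Work3.


Section Work4.
Variables (K : fieldType) (q : K) (n : nat).
Local Notation tens := (tens K n).

Definition inI a b (f : tens) := exists c : (a + b).-tuple 'I_n -> nat -> K,
  forall u : (a + b).-tuple 'I_n,
    f u = \sum_(w : (a + b).-tuple 'I_n) \sum_(p < a + b) c w p * relgen q a b w p u.

Lemma inI_ext a b (f g : tens) : (forall u, size u = (a + b)%N -> f u = g u) ->
  inI a b g -> inI a b f.
Proof. by move=> h [c hc]; exists c => u; rewrite h ?size_tuple. Qed.

Lemma inI0 a b : inI a b (fun _ => 0).
Proof. by exists (fun _ _ => 0) => u; rewrite big1 // => w _; rewrite big1 // => p _; rewrite mul0r. Qed.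

Lemma inI_add a b (f g : tens) : inI a b f -> inI a b g -> inI a b (fun u => f u + g u).
Proof.
move=> [c hc] [d hd]; exists (fun w p => c w p + d w p) => u.
rewrite hc hd -big_split /=; apply: eq_bigr => w _.
by rewrite -big_split /=; apply: eq_bigr => p _; rewrite mulrDl.
Qed.

Lemma inI_scale a b (k : K) (f : tens) : inI a b f -> inI a b (fun u => k * f u).
Proof.
move=> [c hc]; exists (fun w p => k * c w p) => u.
rewrite hc mulr_sumr; apply: eq_bigr => w _.
by rewrite mulr_sumr; apply: eq_bigr => p _; rewrite mulrA.
Qed.

Lemma inI_sum a b m (F : nat -> tens) : (forall i, (i < m)%N -> inI a b (F i)) ->
  inI a b (fun u => \sum_(i < m) F i u).
Proof.
elim: m => [|m IH] h.
  by apply: inI_ext (inI0 a b) => u _; rewrite big_ord0.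
apply: inI_ext (inI_add (IH _) (h m _)) => //; last by move=> i hi; apply: h; lia.
by move=> u _; rewrite big_ord_recr.
Qed.

Lemma sum_ord_pick N p (F : nat -> K) : (p < N)%N ->
  \sum_(i < N) (i == p :> nat)%:R * F i = F p.
Proof.
move=> hp; rewrite (bigD1 (Ordinal hp)) //= eqxx mul1r big1 ?addr0 // => i hi.
have : (i : nat) != p by apply/negP => /eqP E; move: hi; rewrite -(inj_eq val_inj) /= E eqxx.
by move/negbTE => ->; rewrite mul0r.
Qed.

Lemma sum_rel N p (F G : seq 'I_n -> K) (u : seq 'I_n) : size u = N ->
  \sum_(w : N.-tuple 'I_n) (F w * ev K (swp p w) u + G w * ev K w u)
  = F (swp p u) + G u.
Proof.
move=> hu; rewrite /ev big_split /=.
have E : forall w : N.-tuple 'I_n, (u == swp p w) = (swp p u == w).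
  by move=> w; apply/eqP/eqP => [->|<-]; rewrite swpK.
under eq_bigr => w _ do rewrite E.
by rewrite !sum_tuple_eq size_swp hu eqxx.
Qed.

Definition isinc p (w : seq 'I_n) : K :=
  match drop p w with i :: j :: _ => (i < j)%N%:R | _ => 0 end.
Definition iseq p (w : seq 'I_n) : K :=
  match drop p w with i :: j :: _ => (i == j)%:R | _ => 0 end.

Lemma relgenS a b w p u : (p.+2 <= a)%N ->
  relgen q a b w p u = isinc p w * (ev K (swp p w) u - q * ev K w u).
Proof.
move=> h; rewrite /relgen /isinc /swp /tz.
case: (drop p w) => [|i [|j r]] /=; try by rewrite mul0r.
rewrite h; case: ifP => _ /=; first by rewrite mul1r.
by rewrite mul0r.
Qed.

Lemma relgenL a b w p u : (a <= p)%N -> (p.+2 <= a + b)%N ->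
  relgen q a b w p u = isinc p w * (ev K (swp p w) u + q^-1 * ev K w u)
                       + iseq p w * ev K w u.
Proof.
move=> h1 h2; rewrite /relgen /isinc /iseq /swp /tz.
case: (drop p w) => [|i [|j r]] /=; try by rewrite !mul0r addr0.
rewrite ifF; last by lia.
rewrite h1 h2 /=; case: ifP => hij /=.
  have -> : (i == j) = false by apply/negP => /eqP E; move: hij; rewrite E ltnn.
  by rewrite /= mul1r mul0r addr0.
rewrite mul0r add0r; case: ifP => _ /=; first by rewrite mul1r.
by rewrite mul0r.
Qed.

Lemma inI_S a b p (v : tens) : q != 0 -> (p.+2 <= a)%N ->
  inI a b (fun u => Tf q p v u - q * v u).
Proof.
move=> q0 hp.
exists (fun w p' => (p' == p :> nat)%:R * ((v w - q^-1 * v (swp p w)) * isinc p w)) => u.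
have hpN : (p < a + b)%N by lia.
under eq_bigr => w _ do
  (under eq_bigr => i _ do rewrite -mulrA; rewrite (sum_ord_pick (fun i => _ * relgen q a b w i u) hpN)).
have E : forall w : (a + b).-tuple 'I_n,
  (v w - q^-1 * v (swp p w)) * isinc p w * relgen q a b w p u =
  ((v w - q^-1 * v (swp p w)) * isinc p w * isinc p w) * ev K (swp p w) u
  + (- q * ((v w - q^-1 * v (swp p w)) * isinc p w * isinc p w)) * ev K w u.
  by move=> w; rewrite relgenS //; ring.
rewrite (eq_bigr _ (fun w _ => E w)).
rewrite (sum_rel p (fun w => (v w - q^-1 * v (swp p w)) * isinc p w * isinc p w)
  (fun w => - q * ((v w - q^-1 * v (swp p w)) * isinc p w * isinc p w)) (size_tuple u)) swpK.
have hu : (p.+1 < size u)%N by rewrite size_tuple; lia.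
have [pre [i [j [r [hp' ->]]]]] := decomp hu.
rewrite /Tf swp_cat // c1_cat // c2_cat // /isinc !drop_cat_sz //.
rewrite /lc1 /lc2 -!(inj_eq val_inj) /=.
case: (ltngtP i j) => h; last first.
  by have {h}h := val_inj h; subst j; rewrite /=; field.
all: by rewrite /=; field.
Qed.

Lemma inI_L a b p (v : tens) : q != 0 -> (a <= p)%N -> (p.+2 <= a + b)%N ->
  inI a b (fun u => Tf q p v u + q^-1 * v u).
Proof.
move=> q0 h1 h2.
exists (fun w p' => (p' == p :> nat)%:R *
   (isinc p w * (v w + q * v (swp p w)) + iseq p w * (q + q^-1) * v w)) => u.
have hpN : (p < a + b)%N by lia.
under eq_bigr => w _ do
  (under eq_bigr => i _ do rewrite -mulrA; rewrite (sum_ord_pick (fun i => _ * relgen q a b w i u) hpN)).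
set C := fun w => isinc p w * (v w + q * v (swp p w)) + iseq p w * (q + q^-1) * v w.
have E : forall w : (a + b).-tuple 'I_n,
  (isinc p w * (v w + q * v (swp p w)) + iseq p w * (q + q^-1) * v w) * relgen q a b w p u =
  (C w * isinc p w) * ev K (swp p w) u
  + (C w * (isinc p w * q^-1 + iseq p w)) * ev K w u.
  by move=> w; rewrite relgenL // /C; ring.
rewrite (eq_bigr _ (fun w _ => E w)).
rewrite (sum_rel p (fun w => C w * isinc p w)
  (fun w => C w * (isinc p w * q^-1 + iseq p w)) (size_tuple u)) /C swpK.
have hu : (p.+1 < size u)%N by rewrite size_tuple; lia.
have [pre [i [j [r [hp' ->]]]]] := decomp hu.
rewrite /Tf swp_cat // c1_cat // c2_cat // /isinc /iseq !drop_cat_sz //.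
rewrite /lc1 /lc2 -!(inj_eq val_inj) /=.
case: (ltngtP i j) => h; last first.
  by have {h}h := val_inj h; subst j; rewrite ?eqxx /=; field.
all: by rewrite ?(ltn_eqF h) ?(gtn_eqF h) /=; field.
Qed.

Lemma cong_mR a b A C (v : tens) : q != 0 -> (A + C < a)%N ->
  inI a b (fun u => mR q A C v u - q ^+ C * v u).
Proof.
move=> q0; elim: C A v => [|C IH] A v h.
  by apply: inI_ext (inI0 a b) => u _; rewrite /= expr0 mul1r subrr.
have H1 : (A.+1 + C < a)%N by lia.
have H2 : (A.+2 <= a)%N by lia.
have E := inI_add (IH A.+1 (Tf q A v) H1) (inI_scale (q ^+ C) (@inI_S a b A v q0 H2)).
apply: inI_ext E => u _; rewrite mR_S exprS; ring.
Qed.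

Lemma cong_PL a b s k (v : tens) : q != 0 -> (a <= s)%N -> (s + k < a + b)%N ->
  inI a b (fun u => PL q s k v u - (- q^-1) ^+ k * v u).
Proof.
move=> q0; elim: k v => [|k IH] v h1 h2.
  by apply: inI_ext (inI0 a b) => u _; rewrite /= expr0 mul1r subrr.
have H1 : (s + k < a + b)%N by lia.
have H2 : (a <= s + k)%N by lia.
have H3 : ((s + k).+2 <= a + b)%N by lia.
have E := inI_add (IH (Tf q (s + k) v) h1 H1)
   (inI_scale ((- q^-1) ^+ k) (@inI_L a b (s + k) v q0 H2 H3)).
apply: inI_ext E => u _; rewrite PL_S exprS; ring.
Qed.

End Work4.


Section Work5.
Variables (K : fieldType) (q : K) (n : nat).
Local Notation tens := (tens K n).

Definition eqN N (x y : tens) := forall u : seq 'I_n, size u = N -> x u = y u.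
Arguments eqN : simpl never.
Definition rs N (x : tens) : tens := fun u => if size u == N then x u else 0.

Lemma supp_rs N x : supp N (rs N x).
Proof. by move=> u hu; rewrite /rs (negbTE hu). Qed.
Lemma eqN_rs N x : eqN N (rs N x) x.
Proof. by move=> u hu; rewrite /rs hu eqxx. Qed.
Lemma eqN_sym N x y : eqN N x y -> eqN N y x.
Proof. by move=> h u hu; rewrite h. Qed.
Lemma eqN_trans N x y z : eqN N x y -> eqN N y z -> eqN N x z.
Proof. by move=> h1 h2 u hu; rewrite h1 ?h2. Qed.

Lemma Tf_eqN N p x y : eqN N x y -> eqN N (Tf q p x) (Tf q p y).
Proof. by move=> h u hu; rewrite /Tf !h ?size_swp. Qed.
Lemma mR_eqN N pos s x y : eqN N x y -> eqN N (mR q pos s x) (mR q pos s y).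
Proof. by elim: s pos x y => [|s IH] pos x y h //=; apply: IH; apply: Tf_eqN. Qed.
Lemma Br_eqN N p r s x y : eqN N x y -> eqN N (Br q p r s x) (Br q p r s y).
Proof. by elim: r x y => [|r IH] x y h //=; apply: IH; apply: mR_eqN. Qed.
Lemma PL_eqN N s k x y : eqN N x y -> eqN N (PL q s k x) (PL q s k y).
Proof. by elim: k x y => [|k IH] x y h //=; apply: IH; apply: Tf_eqN. Qed.

Lemma Top_eqN d p x y : eqN d x y -> eqN d (Top q d p x) (Tf q p y).
Proof. by move=> h u hu; rewrite Top_Tf hu eqxx; apply: (Tf_eqN p h hu). Qed.

Lemma moveR_eqN d pos s x y : eqN d x y -> eqN d (moveR q d pos s x) (mR q pos s y).
Proof.
elim: s pos x y => [|s IH] pos x y h //=.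
by apply: IH; apply: Top_eqN.
Qed.
Lemma braid_eqN d p r s x y : eqN d x y -> eqN d (braid q d p r s x) (Br q p r s y).
Proof.
elim: r x y => [|r IH] x y h //=.
by apply: IH; apply: moveR_eqN.
Qed.
Lemma pullL_eqN d s k x y : eqN d x y -> eqN d (pullL q d s k x) (PL q s k y).
Proof.
elim: k x y => [|k IH] x y h //=.
by apply: IH; apply: Top_eqN.
Qed.
Lemma pushR_eqN d s k x y : (k < s)%N -> eqN d x y ->
  eqN d (pushR q d s k x) (mR q (s - k.+1) k y).
Proof.
elim: k x y => [|k IH] x y hk h //=.
have -> : ((s - k.+2).+1 = s - k.+1)%N by lia.
by apply: IH; [lia | apply: Top_eqN].
Qed.

Lemma Kmul_eqN p r s t x y :
  eqN (p + r + s + t) (Kmul q p r s t x y) (Br q p r s (tensor (p + r) x y)).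
Proof. by apply: braid_eqN. Qed.

Lemma tensor_eqN D E x x' y y' : eqN D x x' -> eqN E y y' ->
  eqN (D + E) (tensor D x y) (tensor D x' y').
Proof.
move=> h1 h2 u hu; rewrite /tensor h1 ?h2 //.
  by rewrite size_drop hu; lia.
by rewrite size_take hu; case: ifP => //; lia.
Qed.

Lemma kappa_eqN s m x y : (0 < m)%N -> eqN (s + m) x y ->
  eqN (s + m) (kappa q s m x) (fun u => \sum_(k < m) (- q^-1) ^+ k * PL q s k y u).
Proof.
case: m => [|m] // _ h u hu /=.
by apply: eq_bigr => k _; congr (_ * _); apply: pullL_eqN h u hu.
Qed.

Lemma delta_eqN s m x y : (0 < s)%N -> eqN (s + m) x y ->
  eqN (s + m) (delta q s m x) (fun u => \sum_(k < s) q ^+ k * mR q (s - k.+1) k y u).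
Proof.
case: s => [|s] // _ h u hu /=.
by apply: eq_bigr => k _; congr (_ * _); apply: pushR_eqN h u hu.
Qed.

Lemma Tf_lin p m (c : nat -> K) (F : nat -> tens) :
  Tf q p (fun u => \sum_(k < m) c k * F k u) = fun u => \sum_(k < m) c k * Tf q p (F k) u.
Proof.
apply: functional_extensionality => u; rewrite /Tf !mulr_sumr -big_split /=.
by apply: eq_bigr => k _; ring.
Qed.
Lemma mR_lin pos s m (c : nat -> K) (F : nat -> tens) :
  mR q pos s (fun u => \sum_(k < m) c k * F k u) = fun u => \sum_(k < m) c k * mR q pos s (F k) u.
Proof. by elim: s pos F => [|s IH] pos F //; rewrite mR_S Tf_lin (IH pos.+1 (fun k => Tf q pos (F k))). Qed.
Lemma Br_lin p r s m (c : nat -> K) (F : nat -> tens) :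
  Br q p r s (fun u => \sum_(k < m) c k * F k u) = fun u => \sum_(k < m) c k * Br q p r s (F k) u.
Proof. by elim: r F => [|r IH] F //; rewrite Br_S mR_lin (IH (fun k => mR q (p + r) s (F k))). Qed.

Lemma tensor_linL D m (c : nat -> K) (F : nat -> tens) y :
  tensor D (fun u => \sum_(k < m) c k * F k u) y = fun u => \sum_(k < m) c k * tensor D (F k) y u.
Proof.
apply: functional_extensionality => u; rewrite /tensor mulr_suml.
by apply: eq_bigr => k _; rewrite mulrA.
Qed.
Lemma tensor_linR D m (c : nat -> K) (F : nat -> tens) x :
  tensor D x (fun u => \sum_(k < m) c k * F k u) = fun u => \sum_(k < m) c k * tensor D x (F k) u.
Proof.
apply: functional_extensionality => u; rewrite /tensor mulr_sumr.
by apply: eq_bigr => k _; ring.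
Qed.

Lemma Top_tz d p : Top q d p (@tz K n) = @tz K n.
Proof.
apply: functional_extensionality => u; rewrite Top_Tf /Tf /tz.
by case: ifP => _ //; rewrite !mulr0 addr0.
Qed.
Lemma moveR_tz d pos s : moveR q d pos s (@tz K n) = @tz K n.
Proof. by elim: s pos => [|s IH] pos //=; rewrite Top_tz IH. Qed.
Lemma braid_tz d p r s : braid q d p r s (@tz K n) = @tz K n.
Proof. by elim: r => [|r IH] //=; rewrite moveR_tz IH. Qed.
Lemma Kmul_tzL p r s t y : Kmul q p r s t (@tz K n) y = @tz K n.
Proof.
rewrite /Kmul (_ : tensor _ _ _ = @tz K n) ?braid_tz //.
by apply: functional_extensionality => u; rewrite /tensor /tz mul0r.
Qed.
Lemma Kmul_tzR p r s t x : Kmul q p r s t x (@tz K n) = @tz K n.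
Proof.
rewrite /Kmul (_ : tensor _ _ _ = @tz K n) ?braid_tz //.
by apply: functional_extensionality => u; rewrite /tensor /tz mulr0.
Qed.

Lemma take_long D p pre (a b : 'I_n) r : size pre = p -> (p.+2 <= D)%N ->
  take D (pre ++ a :: b :: r) = pre ++ a :: b :: take (D - p.+2) r.
Proof.
move=> hp hD; rewrite take_cat hp ifF; last by lia.
by have -> : (D - p = (D - p.+2).+2)%N by lia.
Qed.
Lemma drop_long D p pre (a b : 'I_n) r : size pre = p -> (p.+2 <= D)%N ->
  drop D (pre ++ a :: b :: r) = drop (D - p.+2) r.
Proof.
move=> hp hD; rewrite drop_cat hp ifF; last by lia.
by have -> : (D - p = (D - p.+2).+2)%N by lia.
Qed.

Lemma Tf_tensorL D p (x y : tens) : (p.+2 <= D)%N ->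
  Tf q p (tensor D x y) = tensor D (Tf q p x) y.
Proof.
move=> hD; apply: functional_extensionality => u.
case: (ltnP p.+1 (size u)) => hs; last first.
  rewrite Tf_short // /tensor Tf_short //.
  by rewrite size_take; case: ifP => //; lia.
have [pre [i [j [r [hp ->]]]]] := decomp hs.
rewrite /Tf /tensor swp_cat // c1_cat // c2_cat // !(take_long (p:=p)) // !(drop_long (p:=p)) //.
rewrite swp_cat // c1_cat // c2_cat //; ring.
Qed.

Lemma Tf_tensorR D p (x y : tens) : (D <= p)%N ->
  Tf q p (tensor D x y) = tensor D x (Tf q (p - D) y).
Proof.
move=> hD; apply: functional_extensionality => u.
case: (ltnP p.+1 (size u)) => hs; last first.
  rewrite Tf_short // /tensor Tf_short //.
  by rewrite size_drop; lia.
have [pre [i [j [r [hp ->]]]]] := decomp hs.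
have E : pre = take D pre ++ drop D pre by rewrite cat_take_drop.
have h1 : size (take D pre) = D by rewrite size_take; case: ifP => //; lia.
have h2 : size (drop D pre) = (p - D)%N by rewrite size_drop hp.
rewrite /Tf /tensor swp_cat // c1_cat // c2_cat //.
rewrite E -!catA !take_cat_sz // !drop_cat_sz //.
rewrite swp_cat // c1_cat // c2_cat //; ring.
Qed.

Lemma PL_tensorL D s k (x y : tens) : (s + k < D)%N ->
  PL q s k (tensor D x y) = tensor D (PL q s k x) y.
Proof.
elim: k x => [|k IH] x h //=.
rewrite Tf_tensorL; last by lia.
by rewrite IH //; lia.
Qed.
Lemma PL_tensorR D s k (x y : tens) : (D <= s)%N ->
  PL q s k (tensor D x y) = tensor D x (PL q (s - D) k y).
Proof.
elim: k y => [|k IH] y h //=.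
rewrite Tf_tensorR; last by lia.
rewrite IH //; congr (tensor _ _ (PL _ _ _ (Tf _ _ _))); lia.
Qed.
Lemma mR_tensorL D pos s (x y : tens) : (pos + s < D)%N ->
  mR q pos s (tensor D x y) = tensor D (mR q pos s x) y.
Proof.
elim: s pos x => [|s IH] pos x h //=.
rewrite Tf_tensorL; last by lia.
by rewrite IH //; lia.
Qed.
Lemma mR_tensorR D pos s (x y : tens) : (D <= pos)%N ->
  mR q pos s (tensor D x y) = tensor D x (mR q (pos - D) s y).
Proof.
elim: s pos y => [|s IH] pos y h //=.
rewrite Tf_tensorR //.
rewrite IH; last by lia.
by have -> : (pos.+1 - D = (pos - D).+1)%N by lia.
Qed.

End Work5.


Section Work6.
Variables (K : fieldType) (q : K) (n : nat).
Hypothesis q0 : q != 0.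
Local Notation tens := (tens K n).

Lemma cong_inI a b (X Y : tens) : inI q a b (fun u => X u - Y u) -> cong q a b X Y.
Proof. by []. Qed.

Lemma sum_split m1 m2 (f : nat -> K) :
  \sum_(k < m1 + m2) f k = \sum_(k < m1) f k + \sum_(k < m2) f (m1 + k)%N.
Proof. by rewrite big_split_ord. Qed.

Lemma sum_eqb m m' (f : nat -> K) : m = m' -> \sum_(k < m) f k = \sum_(k < m') f k.
Proof. by move=> ->. Qed.

Lemma I1 N A B C k (X : tens) : supp N X -> (k < B)%N -> (A + B + C <= N)%N ->
  PL q (A + C) k (Br q A B C X) = mR q A C (Br q A.+1 B.-1 C (PL q A k X)).
Proof.
move=> hX hk hN; rewrite -(Br_PL_act q0 hX hk hN).
by case: B hk hN => [|B] // _ _; rewrite Br_first.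
Qed.

Lemma I2 A B C k (X : tens) :
  PL q (A + C) (B + k) (Br q A B C X) = Br q A B C.+1 (PL q (A + B + C) k X).
Proof.
rewrite PL_add -Br_PL; last by lia.
by rewrite Br_PLs addnAC.
Qed.

Lemma I3 N A B C k (X : tens) : supp N X -> (k < C)%N -> (A + B + C <= N)%N ->
  mR q (A + C - k.+1) k (Br q A B C X)
  = PL q (A + C).-1 B (Br q A B C.-1 (mR q (A + B + (C - k.+1)) k X)).
Proof.
move=> hX hk hN.
have h1 : (A <= A + C - k.+1)%N by lia.
have h2 : (A + C - k.+1 + k < A + C)%N by lia.
rewrite -(Br_mR_pas q0 hX h1 h2 hN).
have -> : (A + C - k.+1 + B = A + B + (C - k.+1))%N by lia.
case: C hk hN h1 h2 => [|C] // _ _ _ _.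
by rewrite -Br_PLs addnS.
Qed.

Lemma I4 A B C k (X : tens) : (k < A)%N ->
  mR q (A + C - (C + k).+1) (C + k) (Br q A B C X)
  = Br q A.-1 B.+1 C (mR q (A - k.+1) k X).
Proof.
move=> hk.
have -> : (A + C - (C + k).+1 = A - k.+1)%N by lia.
rewrite addnC mR_add -Br_mR; last by lia.
have -> : (A - k.+1 + k = A.-1)%N by lia.
case: A hk => [|A] // _.
by rewrite Br_first.
Qed.

Lemma kL N A B C D (x y : tens) u : size u = N -> N = (A + B + C + D)%N -> (0 < B + D)%N ->
  kappa q (A + C) (B + D) (Kmul q A B C D x y) u
   = \sum_(k < B + D) (- q^-1) ^+ k * PL q (A + C) k (Br q A B C (rs N (tensor (A + B) x y))) u.
Proof.
move=> hu hN hBD.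
have hs : (A + C + (B + D) = N)%N by lia.
have E : eqN (A + C + (B + D)) (Kmul q A B C D x y) (Br q A B C (rs N (tensor (A + B) x y))).
  rewrite hs => v hv; rewrite (Kmul_eqN q x y (_ : size v = _)); last by rewrite hv hN.
  exact: (Br_eqN q A B C (eqN_sym (eqN_rs _)) hv).
by rewrite (kappa_eqN q hBD E) // hs.
Qed.

Lemma kT1 N A B C D (x y : tens) u : size u = N -> N = (A + B + C + D)%N ->
  Kmul q A.+1 B.-1 C D (kappa q A B x) y u
  = \sum_(k < B) (- q^-1) ^+ k * Br q A.+1 B.-1 C (PL q A k (rs N (tensor (A + B) x y))) u.
Proof.
move=> hu hN.
case: B hN => [|B] hN; first by rewrite /= Kmul_tzL big_ord0.
rewrite (Kmul_eqN q _ y (_ : size u = _)); last by rewrite hu hN; lia.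
have F1 : eqN N (tensor (A.+1 + B.+1.-1) (kappa q A B.+1 x) y)
   (fun v => \sum_(k < B.+1) (- q^-1) ^+ k * PL q A k (rs N (tensor (A + B.+1) x y)) v).
  have -> : (A.+1 + B.+1.-1 = A + B.+1)%N by lia.
  move=> v hv; rewrite /tensor.
  rewrite (kappa_eqN q (y := x) (ltn0Sn B) (fun _ _ => erefl)); last first.
    by rewrite size_take hv hN; case: ifP => //; lia.
  rewrite mulr_suml; apply: eq_bigr => k _.
  rewrite -mulrA; congr (_ * _).
  rewrite (PL_eqN q A k (eqN_rs _) hv) PL_tensorL //.
  by have := ltn_ord k; lia.
rewrite (Br_eqN q _ _ _ F1 hu).
by rewrite (Br_lin q A.+1 B C B.+1 (fun k : nat => (- q^-1) ^+ k) (fun k => PL q A k (rs N (tensor (A + B.+1) x y)))).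
Qed.

Lemma kT2 N A B C D (x y : tens) u : size u = N -> N = (A + B + C + D)%N ->
  Kmul q A B C.+1 D.-1 x (kappa q C D y) u
  = \sum_(k < D) (- q^-1) ^+ k * Br q A B C.+1 (PL q (A + B + C) k (rs N (tensor (A + B) x y))) u.
Proof.
move=> hu hN.
case: D hN => [|D] hN; first by rewrite /= Kmul_tzR big_ord0.
rewrite (Kmul_eqN q x _ (_ : size u = _)); last by rewrite hu hN; lia.
have F1 : eqN N (tensor (A + B) x (kappa q C D.+1 y))
   (fun v => \sum_(k < D.+1) (- q^-1) ^+ k * PL q (A + B + C) k (rs N (tensor (A + B) x y)) v).
  move=> v hv; rewrite /tensor.
  rewrite (kappa_eqN q (y := y) (ltn0Sn D) (fun _ _ => erefl)); last first.
    by rewrite size_drop hv hN; lia.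
  rewrite mulr_sumr; apply: eq_bigr => k _.
  rewrite mulrCA; congr (_ * _).
  rewrite (PL_eqN q _ k (eqN_rs _) hv) PL_tensorR; last by lia.
  by rewrite /tensor; have -> : (A + B + C - (A + B) = C)%N by lia.
rewrite (Br_eqN q _ _ _ F1 hu).
by rewrite (Br_lin q A B C.+1 D.+1 (fun k : nat => (- q^-1) ^+ k) (fun k => PL q (A + B + C) k (rs N (tensor (A + B) x y)))).
Qed.

Lemma kappa_part A B C D (x y : tens) :
  cong q (A + C).+1 (B + D).-1 (kappa q (A + C) (B + D) (Kmul q A B C D x y))
   (fun u => q ^+ C * Kmul q A.+1 B.-1 C D (kappa q A B x) y u
           + (- q^-1) ^+ B * Kmul q A B C.+1 D.-1 x (kappa q C D y) u).
Proof.
apply: cong_inI.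
case: (posnP (B + D)) => hBD.
  have hB : B = 0%N by lia.
  have hD : D = 0%N by lia.
  subst B D => /=.
  rewrite Kmul_tzL Kmul_tzR.
  exists (fun _ _ => 0) => u.
  rewrite big1; last by move=> w _; rewrite big1 // => p _; rewrite mul0r.
  rewrite /tz; ring.
pose N := (A + B + C + D)%N.
pose Xr := rs N (tensor (A + B) x y).
have hXr : supp N Xr by apply: supp_rs.
have hab : ((A + C).+1 + (B + D).-1 = N)%N by rewrite /N; lia.
pose c := - q^-1.
pose W k := Br q A.+1 B.-1 C (PL q A k Xr).
pose V k := Br q A B C.+1 (PL q (A + B + C) k Xr).
have main : inI q (A + C).+1 (B + D).-1
   (fun u => \sum_(k < B) c ^+ k * (mR q A C (W k) u - q ^+ C * W k u)).
  apply: (inI_sum (F := fun k u => c ^+ k * (mR q A C (W k) u - q ^+ C * W k u))) => k hk.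
  apply: inI_scale; apply: cong_mR => //; lia.
apply: inI_ext main => u hu; rewrite hab in hu.
rewrite (kL x y hu erefl hBD) (kT1 x y hu erefl) (kT2 x y hu erefl).
rewrite (sum_split B D (fun k => c ^+ k * PL q (A + C) k (Br q A B C Xr) u)).
have s1 : \sum_(k < B) c ^+ k * PL q (A + C) k (Br q A B C Xr) u
        = \sum_(k < B) c ^+ k * mR q A C (W k) u.
  apply: eq_bigr => k _; rewrite (I1 hXr (ltn_ord k)) //; rewrite /N; lia.
have s2 : \sum_(k < D) c ^+ (B + k) * PL q (A + C) (B + k) (Br q A B C Xr) u
        = c ^+ B * \sum_(k < D) c ^+ k * V k u.
  rewrite mulr_sumr; apply: eq_bigr => k _; rewrite I2 exprD /V; ring.
rewrite s1 s2.
have s3 : \sum_(k < B) c ^+ k * (mR q A C (W k) u - q ^+ C * W k u)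
        = \sum_(k < B) c ^+ k * mR q A C (W k) u - q ^+ C * \sum_(k < B) c ^+ k * W k u.
  rewrite mulr_sumr -sumrB; apply: eq_bigr => k _; ring.
rewrite s3 /c; ring.
Qed.

Lemma dL N A B C D (x y : tens) u : size u = N -> N = (A + B + C + D)%N -> (0 < A + C)%N ->
  delta q (A + C) (B + D) (Kmul q A B C D x y) u
   = \sum_(k < A + C) q ^+ k * mR q (A + C - k.+1) k (Br q A B C (rs N (tensor (A + B) x y))) u.
Proof.
move=> hu hN hAC.
have hs : (A + C + (B + D) = N)%N by lia.
have E : eqN (A + C + (B + D)) (Kmul q A B C D x y) (Br q A B C (rs N (tensor (A + B) x y))).
  rewrite hs => v hv; rewrite (Kmul_eqN q x y (_ : size v = _)); last by rewrite hv hN.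
  exact: (Br_eqN q A B C (eqN_sym (eqN_rs _)) hv).
by rewrite (delta_eqN q hAC E) // hs.
Qed.

Lemma dT1 N A B C D (x y : tens) u : size u = N -> N = (A + B + C + D)%N ->
  Kmul q A.-1 B.+1 C D (delta q A B x) y u
  = \sum_(k < A) q ^+ k * Br q A.-1 B.+1 C (mR q (A - k.+1) k (rs N (tensor (A + B) x y))) u.
Proof.
move=> hu hN.
case: A hN => [|A] hN; first by rewrite /= Kmul_tzL big_ord0.
rewrite (Kmul_eqN q _ y (_ : size u = _)); last by rewrite hu hN; lia.
have F1 : eqN N (tensor (A.+1.-1 + B.+1) (delta q A.+1 B x) y)
   (fun v => \sum_(k < A.+1) q ^+ k * mR q (A.+1 - k.+1) k (rs N (tensor (A.+1 + B) x y)) v).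
  have -> : (A.+1.-1 + B.+1 = A.+1 + B)%N by lia.
  move=> v hv; rewrite /tensor.
  rewrite (delta_eqN q (y := x) (ltn0Sn A) (fun _ _ => erefl)); last first.
    by rewrite size_take hv hN; case: ifP => //; lia.
  rewrite mulr_suml; apply: eq_bigr => k _.
  rewrite -mulrA; congr (_ * _).
  rewrite (mR_eqN q _ k (eqN_rs _) hv) mR_tensorL //.
  by have := ltn_ord k; lia.
rewrite (Br_eqN q _ _ _ F1 hu).
by rewrite (Br_lin q A B.+1 C A.+1 (fun k : nat => q ^+ k) (fun k => mR q (A.+1 - k.+1) k (rs N (tensor (A.+1 + B) x y)))).
Qed.

Lemma dT2 N A B C D (x y : tens) u : size u = N -> N = (A + B + C + D)%N ->
  Kmul q A B C.-1 D.+1 x (delta q C D y) u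
  = \sum_(k < C) q ^+ k * Br q A B C.-1 (mR q (A + B + (C - k.+1)) k (rs N (tensor (A + B) x y))) u.
Proof.
move=> hu hN.
case: C hN => [|C] hN; first by rewrite /= Kmul_tzR big_ord0.
rewrite (Kmul_eqN q x _ (_ : size u = _)); last by rewrite hu hN; lia.
have F1 : eqN N (tensor (A + B) x (delta q C.+1 D y))
   (fun v => \sum_(k < C.+1) q ^+ k * mR q (A + B + (C.+1 - k.+1)) k (rs N (tensor (A + B) x y)) v).
  move=> v hv; rewrite /tensor.
  rewrite (delta_eqN q (y := y) (ltn0Sn C) (fun _ _ => erefl)); last first.
    by rewrite size_drop hv hN; lia.
  rewrite mulr_sumr; apply: eq_bigr => k _.
  rewrite mulrCA; congr (_ * _).
  rewrite (mR_eqN q _ k (eqN_rs _) hv) mR_tensorR; last by lia.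
  by rewrite /tensor; have -> : (A + B + (C.+1 - k.+1) - (A + B) = C.+1 - k.+1)%N by lia.
rewrite (Br_eqN q _ _ _ F1 hu).
by rewrite (Br_lin q A B C C.+1 (fun k : nat => q ^+ k) (fun k => mR q (A + B + (C.+1 - k.+1)) k (rs N (tensor (A + B) x y)))).
Qed.

Lemma delta_part A B C D (x y : tens) :
  cong q (A + C).-1 (B + D).+1 (delta q (A + C) (B + D) (Kmul q A B C D x y))
   (fun u => q ^+ C * Kmul q A.-1 B.+1 C D (delta q A B x) y u
           + (- q^-1) ^+ B * Kmul q A B C.-1 D.+1 x (delta q C D y) u).
Proof.
apply: cong_inI.
case: (posnP (A + C)) => hAC.
  have hA : A = 0%N by lia.
  have hC : C = 0%N by lia.
  subst A C => /=.
  rewrite Kmul_tzL Kmul_tzR.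
  exists (fun _ _ => 0) => u.
  rewrite big1; last by move=> w _; rewrite big1 // => p _; rewrite mul0r.
  rewrite /tz; ring.
pose N := (A + B + C + D)%N.
pose Xr := rs N (tensor (A + B) x y).
have hXr : supp N Xr by apply: supp_rs.
have hab : ((A + C).-1 + (B + D).+1 = N)%N by rewrite /N; lia.
pose c := - q^-1.
pose V k := Br q A B C.-1 (mR q (A + B + (C - k.+1)) k Xr).
pose U k := Br q A.-1 B.+1 C (mR q (A - k.+1) k Xr).
have main : inI q (A + C).-1 (B + D).+1
   (fun u => \sum_(k < C) q ^+ k * (PL q (A + C).-1 B (V k) u - c ^+ B * V k u)).
  apply: (inI_sum (F := fun k u => q ^+ k * (PL q (A + C).-1 B (V k) u - c ^+ B * V k u))) => k hk.
  apply: inI_scale; apply: cong_PL => //; lia.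
apply: inI_ext main => u hu; rewrite hab in hu.
rewrite (dL x y hu erefl hAC) (dT1 x y hu erefl) (dT2 x y hu erefl).
rewrite (sum_eqb (fun k => q ^+ k * mR q (A + C - k.+1) k (Br q A B C Xr) u) (addnC A C)).
rewrite (sum_split C A (fun k => q ^+ k * mR q (A + C - k.+1) k (Br q A B C Xr) u)).
have s1 : \sum_(k < C) q ^+ k * mR q (A + C - k.+1) k (Br q A B C Xr) u
        = \sum_(k < C) q ^+ k * PL q (A + C).-1 B (V k) u.
  apply: eq_bigr => k _; rewrite (I3 hXr (ltn_ord k)) //; rewrite /N; lia.
have s2 : \sum_(k < A) q ^+ (C + k) * mR q (A + C - (C + k).+1) (C + k) (Br q A B C Xr) u
        = q ^+ C * \sum_(k < A) q ^+ k * U k u.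
  rewrite mulr_sumr; apply: eq_bigr => k _; rewrite (I4 _ _ _ (ltn_ord k)) exprD /U; ring.
rewrite s1 s2.
have s3 : \sum_(k < C) q ^+ k * (PL q (A + C).-1 B (V k) u - c ^+ B * V k u)
        = \sum_(k < C) q ^+ k * PL q (A + C).-1 B (V k) u - c ^+ B * \sum_(k < C) q ^+ k * V k u.
  rewrite mulr_sumr -sumrB; apply: eq_bigr => k _; ring.
rewrite s3 /c; ring.
Qed.

End Work6.

Unset Implicit Arguments.

Theorem proposition5p3 (K : fieldType) (q : K) (l n : nat) :
  l.-primitive_root q -> odd l -> (1 < l)%N -> (0 < n)%N ->
  (* Koszul differential kappa on K^i_{d1} = S^i (x) Lambda^{d1-i}, etc. *)
  (forall (d1 d2 i j : nat) (x y : tens K n),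
     (i <= d1)%N -> (j <= d2)%N ->
     cong q (i + j).+1 (d1 + d2 - (i + j)).-1
       (kappa q (i + j) (d1 + d2 - (i + j)) (Kmul q i (d1 - i) j (d2 - j) x y))
       (fun u =>
          q ^+ j * Kmul q i.+1 (d1 - i).-1 j (d2 - j) (kappa q i (d1 - i) x) y u
          + (- q^-1) ^+ (d1 - i)
              * Kmul q i (d1 - i) j.+1 (d2 - j).-1 x (kappa q j (d2 - j) y) u))
  /\
  (* de Rham differential delta on Omega^i_{d1} = S^{d1-i} (x) Lambda^i, etc. *)
  (forall (d1 d2 i j : nat) (x y : tens K n),
     (i <= d1)%N -> (j <= d2)%N ->
     cong q (d1 - i + (d2 - j)).-1 (i + j).+1
       (delta q (d1 - i + (d2 - j)) (i + j) (Kmul q (d1 - i) i (d2 - j) j x y))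
       (fun u =>
          q ^+ (d2 - j) * Kmul q (d1 - i).-1 i.+1 (d2 - j) j (delta q (d1 - i) i x) y u
          + (- q^-1) ^+ i
              * Kmul q (d1 - i) i (d2 - j).-1 j.+1 x (delta q (d2 - j) j y) u)).
Proof.
move=> hprim hodd hl hn.
have q0 : q != 0.
  apply/eqP => hq; move: (prim_expr_order hprim); rewrite hq expr0n.
  have -> : (l == 0)%N = false by apply/negP => /eqP hl0; move: hl; rewrite hl0.
  by move/eqP; rewrite eq_sym oner_eq0.
split.
- move=> d1 d2 i j x y hi hj.
  have E : (d1 + d2 - (i + j) = (d1 - i) + (d2 - j))%N by lia.
  rewrite E.
  exact: (kappa_part q0 i (d1 - i) j (d2 - j) x y).
- move=> d1 d2 i j x y hi hj.
  exact: (delta_part q0 (d1 - i) i (d2 - j) j x y).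
Qed.
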